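(* The sequence $(v_k)_{k\in\mathbb N}$ of represented tensors produced by the ALS method satisfies $\|v_{k+1}-v_k\|_A\to0$ as $k\to\infty$, where $\|v\|_A=\sqrt{\langle Av,v\rangle}$.
   Context: Let $\mathcal V=\bigotimes_{\nu=1}^d\mathbb R^{m_\nu}\cong\mathbb R^N$ with the Euclidean inner product $\langle\cdot,\cdot\rangle$. Let $A\in\mathbb R^{N\times N}$ be symmetric positive definite, $b\in\mathcal V\setminus\{0\}$, $f(v)=\frac{1}{\|b\|^2}(\frac12\langle Av,v\rangle-\langle b,v\rangle)$. Let $L\ge d$, $P_1,\dots,P_L$ finite-dimensional real inner product spaces, $P=P_1\times\dots\times P_L$, $U:P\to\mathcal V$ multilinear. For $\mathbf p\in P$, $W_{\mu,\mathbf p^{[\mu]}}:P_\mu\to\mathcal V$ is $q\mapsto U(p_1,\dots,p_{\mu-1},q,p_{\mu+1},\dots,p_L)$; $X^T$ transpose, $X^+$ pseudoinverse. ALS: choose $\mathbf p_1=(p_1^1,\dots,p_L^1)\in P$; for $k=1,2,\dots$ and $\mu=1,\dots,L$ in order, $W_{k,\mu}:=W_{\mu,(p_1^{k+1},\dots,p_{\mu-1}^{k+1},p_{\mu+1}^k,\dots,p_L^k)}$ and $p_\mu^{k+1}:=(W_{k,\mu}^TAW_{k,\mu})^+W_{k,\mu}^Tb$ (the minimum-norm minimiser of $q\mapsto f(U(p_1^{k+1},\dots,p_{\mu-1}^{k+1},q,p_{\mu+1}^k,\dots,p_L^k))$). Put $v_k=U(p_1^k,\dots,p_L^k)$. *)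

(* Defs.v *)
From HB Require Import structures.
From mathcomp Require Import all_boot all_order all_algebra.
From mathcomp Require Import all_classical all_reals all_analysis.
Set Implicit Arguments. Unset Strict Implicit. Unset Printing Implicit Defensive.
Import Order.TTheory GRing.Theory Num.Theory.
Local Open Scope ring_scope.

Definition param (R : realType) (L : nat) (n : 'I_L -> nat) :=
  forall mu : 'I_L, 'cV[R]_(n mu).

Definition subst_param (R : realType) (L : nat) (n : 'I_L -> nat)
  (p : param R n) (mu : 'I_L) (q : 'cV[R]_(n mu)) : param R n :=
  @dfwith _ (fun i => 'cV[R]_(n i)) p mu q.

Definition multilinear (R : realType) (L N : nat) (n : 'I_L -> nat)
  (U : param R n -> 'cV[R]_N) : Prop :=
  forall (p : param R n) (mu : 'I_L) (a : R) (q1 q2 : 'cV[R]_(n mu)),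
    U (subst_param p (a *: q1 + q2)) =
    a *: U (subst_param p q1) + U (subst_param p q2).

(* Matrix of the linear map W_{mu,p^[mu]} : P_mu -> V, q |-> U(.., q, ..)
   (its j-th column is the image of the j-th standard basis vector). *)
Definition Wmat (R : realType) (L N : nat) (n : 'I_L -> nat)
  (U : param R n -> 'cV[R]_N) (p : param R n) (mu : 'I_L) : 'M[R]_(N, n mu) :=
  \matrix_(r < N, j < n mu) U (subst_param p (delta_mx j 0)) r 0.

Definition spd (R : realType) (N : nat) (A : 'M[R]_N) : Prop :=
  A^T = A /\ forall x : 'cV[R]_N, x != 0 -> 0 < (x^T *m A *m x) 0 0.

(* X is the Moore--Penrose pseudoinverse of M (Penrose equations; it exists
   and is unique). *)
Definition is_pinv (R : realType) (m k : nat) (M : 'M[R]_(m, k)) (X : 'M[R]_(k, m))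
  : Prop :=
  [/\ M *m X *m M = M, X *m M *m X = X, (M *m X)^T = M *m X & (X *m M)^T = X *m M].

Definition normA (R : realType) (N : nat) (A : 'M[R]_N) (v : 'cV[R]_N) : R :=
  Num.sqrt ((v^T *m A *m v) 0 0).

(* Parameter used inside sweep k at core mu:
   (p_1^{k+1},..,p_{mu-1}^{k+1}, p_mu^k, p_{mu+1}^k,..,p_L^k);
   component mu is irrelevant for W. *)
Definition sweep_param (R : realType) (L : nat) (n : 'I_L -> nat)
  (p : nat -> param R n) (k : nat) (mu : 'I_L) : param R n :=
  fun i => if (i < mu)%N then p k.+1 i else p k i.

Definition als_seq (R : realType) (L N : nat) (n : 'I_L -> nat)
  (U : param R n -> 'cV[R]_N) (A : 'M[R]_N) (b : 'cV[R]_N)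
  (p : nat -> param R n) : Prop :=
  forall (k : nat) (mu : 'I_L),
    let W := Wmat U (sweep_param p k mu) mu in
    exists X : 'M[R]_(n mu), is_pinv (W^T *m A *m W) X /\
      p k.+1 mu = X *m (W^T *m b).

(* Main.v *)
Require Import Defs.
From HB Require Import structures.
From mathcomp Require Import all_boot all_order all_algebra.
From mathcomp Require Import all_classical all_reals all_analysis.
From mathcomp Require Import lra.
Import Order.TTheory GRing.Theory Num.Theory.
Set Implicit Arguments. Unset Strict Implicit. Unset Printing Implicit Defensive.
Local Open Scope classical_set_scope.
Local Open Scope ring_scope.

Section Alg.
Variable R : realType.

Definition qf N (A : 'M[R]_N) (x : 'cV[R]_N) : R := (x^T *m A *m x) 0 0.

Lemma qf_ge0 N (A : 'M[R]_N) x : spd A -> 0 <= qf A x.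
Proof.
move=> [_ HA]; have [->|nz] := eqVneq x 0.
  by rewrite /qf mulmx0 mxE.
exact: ltW (HA _ nz).
Qed.

Lemma qf_eq0 N (A : 'M[R]_N) x : spd A -> qf A x = 0 -> x = 0.
Proof.
move=> [_ HA] H; apply/eqP; apply: contraTT isT => nz.
by have := HA _ nz; rewrite -/(qf A x) H ltxx.
Qed.

Definition bf N (A : 'M[R]_N) (x y : 'cV[R]_N) : R := (x^T *m A *m y) 0 0.

Lemma bfDl N (A : 'M[R]_N) x y z : bf A (x + y) z = bf A x z + bf A y z.
Proof. by rewrite /bf [(x + y)^T]linearD /= !mulmxDl mxE. Qed.
Lemma bfDr N (A : 'M[R]_N) x y z : bf A z (x + y) = bf A z x + bf A z y.
Proof. by rewrite /bf mulmxDr mxE. Qed.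
Lemma bfNl N (A : 'M[R]_N) x z : bf A (- x) z = - bf A x z.
Proof. by rewrite /bf [(- x)^T]linearN /= !mulNmx mxE. Qed.
Lemma bfNr N (A : 'M[R]_N) x z : bf A z (- x) = - bf A z x.
Proof. by rewrite /bf mulmxN mxE. Qed.
Lemma bfBl N (A : 'M[R]_N) x y z : bf A (x - y) z = bf A x z - bf A y z.
Proof. by rewrite bfDl bfNl. Qed.
Lemma bfBr N (A : 'M[R]_N) x y z : bf A z (x - y) = bf A z x - bf A z y.
Proof. by rewrite bfDr bfNr. Qed.
Lemma bfC N (A : 'M[R]_N) x y : A^T = A -> bf A x y = bf A y x.
Proof.
move=> HA; rewrite /bf.
rewrite -[LHS]/((x^T *m A *m y) ord0 ord0) -[in LHS](trmxK (x^T *m A *m y)).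
rewrite [in LHS]mxE.
by rewrite !trmx_mul trmxK HA mulmxA.
Qed.

Lemma qfE N (A : 'M[R]_N) x : qf A x = bf A x x. Proof. by []. Qed.

Lemma qfN N (A : 'M[R]_N) x : qf A (- x) = qf A x.
Proof. by rewrite !qfE bfNl bfNr opprK. Qed.

Lemma qfD N (A : 'M[R]_N) x y :
  qf A (x + y) + qf A (x - y) = 2 * qf A x + 2 * qf A y.
Proof.
rewrite !qfE !(bfDl, bfDr, bfNl, bfNr) opprK; lra.
Qed.

Lemma qf_le N (A : 'M[R]_N) x y : spd A -> qf A (x + y) <= 2 * qf A x + 2 * qf A y.
Proof.
move=> HA; rewrite -qfD lerDl; exact: qf_ge0.
Qed.

End Alg.

Section U.
Variables (R : realType) (L N : nat) (n : 'I_L -> nat) (U : param R n -> 'cV[R]_N).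
Hypothesis HU : multilinear U.

Lemma U0 s mu : U (subst_param s (0 : 'cV[R]_(n mu))) = 0.
Proof.
have := HU s (-1) (0 : 'cV[R]_(n mu)) 0; rewrite scaler0 addr0 => H.
by rewrite {1}H scaleN1r addNr.
Qed.

Lemma U_lin s mu q : U (subst_param s q) = Wmat U s mu *m q.
Proof.
have Hq : q = \sum_(j < n mu) q j 0 *: delta_mx j 0.
  rewrite {1}(matrix_sum_delta q); apply: eq_bigr => j _.
  by rewrite big_ord1.
rewrite {1}Hq.
have -> : Wmat U s mu *m q = \sum_(j < n mu) q j 0 *: U (subst_param s (delta_mx j 0)).
  apply/matrixP => r c; rewrite (ord1 c) mxE summxE; apply: eq_bigr => j _.
  by rewrite !mxE mulrC.
elim/big_rec2: _ => [|j y1 y2 _ IH]; first by rewrite U0.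
by rewrite HU IH.
Qed.

End U.

Section NE.
Variable R : realType.

Lemma vec_eq0 k (z : 'cV[R]_k) : (z^T *m z) 0 0 = 0 -> z = 0.
Proof.
rewrite mxE => H; apply/matrixP => i j; rewrite (ord1 j) [RHS]mxE.
have Hp : forall l : 'I_k, xpredT l -> 0 <= z^T 0 l * z l 0.
  by move=> l _; rewrite mxE -expr2 sqr_ge0.
have := @psumr_eq0P _ _ xpredT (fun l => z^T 0 l * z l 0) Hp H i isT.
by rewrite mxE => /eqP; rewrite mulf_eq0 orbb => /eqP.
Qed.

Lemma normal_eq N k (A : 'M[R]_N) (W : 'M[R]_(N, k)) (b : 'cV[R]_N) X :
  spd A -> is_pinv (W^T *m A *m W) X ->
  W^T *m (A *m (W *m (X *m (W^T *m b))) - b) = 0.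
Proof.
move=> HA [H1 H2 H3 H4].
set M := W^T *m A *m W; set y := W^T *m b.
have MT : M^T = M by rewrite /M !trmx_mul trmxK HA.1 mulmxA.
have MMX : M *m (M *m X) = M.
  have E : (M *m X *m M)^T = M *m (M *m X) by rewrite trmx_mul H3 MT.
  by rewrite -E H1 MT.
set z := y - M *m X *m y.
have Mz : M *m z = 0 by rewrite /z mulmxBr (mulmxA M (M *m X) y) MMX subrr.
have Wz : W *m z = 0.
  apply: (qf_eq0 HA); rewrite /qf.
  have -> : (W *m z)^T *m A *m (W *m z) = z^T *m (M *m z) by rewrite trmx_mul /M !mulmxA.
  by rewrite Mz !mulmx0 mxE.
have yz : y^T *m z = 0 by rewrite /y trmx_mul trmxK -mulmxA Wz mulmx0.
have zz : z^T *m z = 0.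
  have zT : z^T = y^T - y^T *m (X^T *m M).
    by rewrite /z [(y - _)^T]linearB /= (trmx_mul (M *m X) y) (trmx_mul M X) MT.
  by rewrite zT mulmxBl yz -!mulmxA Wz !mulmx0 subr0.
have z0 : z = 0 by apply: vec_eq0; rewrite zz mxE.
rewrite mulmxBr !mulmxA -/M -/y.
by rewrite -[RHS]oppr0 -z0 /z opprB mulmxA.
Qed.

End NE.

Section En.
Variable R : realType.
Definition En N (A : 'M[R]_N) (b : 'cV[R]_N) (v : 'cV[R]_N) : R :=
  qf A v / 2 - (b^T *m v) 0 0.

Lemma trE N (b v : 'cV[R]_N) : (b^T *m v) 0 0 = (v^T *m b) 0 0.
Proof.
rewrite -[in LHS](trmxK (b^T *m v)) [in LHS]mxE.
by rewrite trmx_mul trmxK.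
Qed.

Lemma drop N k (A : 'M[R]_N) (b : 'cV[R]_N) (W : 'M[R]_(N, k)) po pn :
  A^T = A -> W^T *m (A *m (W *m pn) - b) = 0 ->
  En A b (W *m po) - En A b (W *m pn) = qf A (W *m po - W *m pn) / 2.
Proof.
move=> HA HN.
set w' := W *m pn; set d := W *m po - w'.
have Hd : bf A d w' = (d^T *m b) 0 0.
  have : d^T *m (A *m w' - b) = 0.
    by rewrite /d -mulmxBr trmx_mul -mulmxA HN mulmx0.
  rewrite mulmxBr => /eqP; rewrite subr_eq0 => /eqP E.
  by rewrite /bf -mulmxA E.
have -> : W *m po = d + w' by rewrite /d subrK.
clearbody d w'.
rewrite /En !qfE !(bfDl, bfDr) (bfC w' d HA) Hd mulmxDr [(b^T *m d + _) 0 0]mxE (trE b d).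
rewrite !mulrDl; lra.
Qed.

Lemma En_lb N (A : 'M[R]_N) (b : 'cV[R]_N) : spd A ->
  exists c, forall v, c <= En A b v.
Proof.
move=> HA.
have Au : A \in unitmx.
  rewrite -row_free_unit; apply: inj_row_free => v Hv.
  apply: trmx_inj; rewrite trmx0; apply: (qf_eq0 HA).
  by rewrite /qf trmxK Hv mul0mx mxE.
set x := invmx A *m b.
have Ax : A *m x = b by rewrite /x mulmxA mulmxV // mul1mx.
exists (- qf A x / 2) => v.
have E : En A b v = qf A (v - x) / 2 - qf A x / 2.
  have Hvx : bf A v x = (b^T *m v) 0 0 by rewrite /bf -mulmxA Ax trE.
  rewrite /En !qfE !(bfBl, bfBr) (bfC x v HA.1) Hvx; lra.
rewrite E; have := qf_ge0 (v - x) HA; lra.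
Qed.

End En.

Import numFieldNormedType.Exports.

Theorem mainTheorem12 (R : realType) (d : nat) (m : 'I_d -> nat) (N : nat)
  (HN : N = (\prod_(nu < d) m nu)%N)
  (L : nat) (HL : (d <= L)%N) (n : 'I_L -> nat)
  (A : 'M[R]_N) (HA : spd A) (b : 'cV[R]_N) (Hb : b != 0)
  (U : param R n -> 'cV[R]_N) (HU : multilinear U)
  (p : nat -> param R n) (Hals : als_seq U A b p) :
  (fun k => normA A (U (p k.+1) - U (p k))) @ \oo --> 0.
Proof.
pose t k (j : nat) : param R n := fun i => if (i < j)%N then p k.+1 i else p k i.
have t0 k : t k 0%N = p k by apply: functional_extensionality_dep => i.
have tL k : t k L = p k.+1.
  by apply: functional_extensionality_dep => i; rewrite /t ltn_ord.
have s1 k (mu : 'I_L) : subst_param (t k mu) (p k mu) = t k mu.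
  apply: functional_extensionality_dep => i; rewrite /subst_param.
  have [<-|ne] := eqVneq mu i; first by rewrite dfwithin /t ltnn.
  by rewrite dfwithout.
have s2 k (mu : 'I_L) : subst_param (t k mu) (p k.+1 mu) = t k mu.+1.
  apply: functional_extensionality_dep => i; rewrite /subst_param.
  have [<-|ne] := eqVneq mu i; first by rewrite dfwithin /t ltnSn.
  have ne' : (nat_of_ord i == nat_of_ord mu) = false.
    by rewrite (inj_eq val_inj) eq_sym (negbTE ne).
  by rewrite dfwithout // /t ltnS [in RHS]leq_eqVlt ne'.
pose e k j := En A b (U (t k j)).
have step k (mu : 'I_L) : e k mu - e k mu.+1 = qf A (U (t k mu) - U (t k mu.+1)) / 2.
  have := Hals k mu; rewrite /= => -[X [HX Hp]].
  have E1 : U (t k mu) = Wmat U (t k mu) mu *m p k mu by rewrite -{1}s1 (U_lin HU).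
  have E2 : U (t k mu.+1) = Wmat U (t k mu) mu *m p k.+1 mu by rewrite -s2 (U_lin HU).
  rewrite /e E1 E2; apply: drop; first exact: HA.1.
  rewrite Hp; exact: normal_eq HA HX.
have claim k j : (j <= L)%N -> e k j <= e k 0%N /\
    qf A (U (t k j) - U (t k 0%N)) <= 2 ^+ j * 2 * (e k 0%N - e k j).
  elim: j => [_|j IH hj].
    by rewrite subrr subrr /qf mulmx0 mxE mulr0.
  have hj' : (j < L)%N := hj.
  have [IH1 IH2] := IH (ltnW hj).
  have st := step k (Ordinal hj').
  have q0 := qf_ge0 (U (t k j) - U (t k j.+1)) HA.
  have P1 : 1 <= 2 ^+ j :> R by apply: exprn_ege1; lra.
  split; first lra.
  have -> : U (t k j.+1) - U (t k 0%N) =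
      (U (t k j) - U (t k 0%N)) + - (U (t k j) - U (t k j.+1)).
    by rewrite opprB [RHS]addrC addrA subrK.
  apply: le_trans (qf_le _ _ HA) _; rewrite qfN exprS.
  set P := 2 ^+ j : R in P1 IH2 *.
  have h0 : 0 <= e k j - e k j.+1 by lra.
  have h1 : 0 <= (P - 1) * (e k j - e k j.+1) by apply: mulr_ge0; lra.
  nra.
pose Ev k := En A b (U (p k)).
have key k : Ev k.+1 <= Ev k /\
    qf A (U (p k.+1) - U (p k)) <= 2 ^+ L * 2 * (Ev k - Ev k.+1).
  by have := claim k L (leqnn L); rewrite /e tL t0.
have [c Hc] := En_lb b HA.
have cvE : cvgn Ev.
  apply: nonincreasing_is_cvgn.
    by apply/nonincreasing_seqP => k; case: (key k).
  by exists c => _ [k _ <-]; exact: Hc.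
have dE : (fun k => Ev k - Ev k.+1) @ \oo --> 0.
  have h1 : (fun k => Ev k.+1) @ \oo --> limn Ev.
    by rewrite (cvg_shiftS Ev).
  rewrite -(subrr (limn Ev)); apply: cvgB => //.
have xs : (fun k => qf A (U (p k.+1) - U (p k))) @ \oo --> 0.
  apply: (@squeeze_cvgr _ _ _ _ (fun=> 0) (fun k => 2 ^+ L * 2 * (Ev k - Ev k.+1))).
  - apply: nearW => k; rewrite qf_ge0 //=; by case: (key k).
  - exact: cvg_cst.
  - rewrite -(mulr0 (2 ^+ L * 2 : R)); exact: cvgMl_tmp.
rewrite -sqrtr0.
apply: (@cvg_comp _ _ _ (fun k => qf A (U (p k.+1) - U (p k))) Num.sqrt _ _ _ xs).
exact: sqrt_continuous.
Qed.
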